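(* Let $n,m,L\ge1$, $\alpha\in(0,1)$, $\beta\ge0$, $\rho\ge0$, and let data matrices $H\in\mathbb R^{n\times L}$, $H^+\in\mathbb R^{n\times L}$, $\Xi\in\mathbb R^{m\times L}$ be given. Define $$N_1:=\begin{bmatrix} I_n & H^+\\ 0 & -H\\ 0 & -\Xi\\ 0&0\\0&0\end{bmatrix}\begin{bmatrix}\beta I_n & 0\\ 0 & -I_L\end{bmatrix}\begin{bmatrix} I_n & H^+\\ 0 & -H\\ 0 & -\Xi\\ 0&0\\0&0\end{bmatrix}^{\!\top},\qquad N_2:=\begin{bmatrix} I_n&0&0\\0&0&0\\0&0&0\\0&I_n&0\\0&0&I_m\end{bmatrix}\begin{bmatrix}\rho^2 I_n&0&0\\0&-I_n&0\\0&0&-I_m\end{bmatrix}\begin{bmatrix} I_n&0&0\\0&0&0\\0&0&0\\0&I_n&0\\0&0&I_m\end{bmatrix}^{\!\top},$$ where the block rows have sizes $n,n,m,n,m$ (zero blocks sized accordingly), and let $\widetilde N_j:=\operatorname{diag}(N_j,0_{n\times n})$, $j=1,2$. For $P\in\mathbb R^{n\times n}$ symmetric, $L_K\in\mathbb R^{m\times n}$ and $\nu>0$, define the symmetric block matrix (block sizes $n,n,m,n,m,n$) $$S(P,L_K,\nu)=\begin{bmatrix} \alpha P-\nu I & 0 & 0 & 0 & 0 & 0\\ 0 & -P & -L_K^\top & -P & -L_K^\top & 0\\ 0 & -L_K & 0 & -L_K & 0 & L_K\\ 0 & -P & -L_K^\top & -P & -L_K^\top & 0\\ 0 & -L_K &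 0 & -L_K & 0 & L_K\\ 0 & 0 & L_K^\top & 0 & L_K^\top & P \end{bmatrix}.$$ Suppose there exist $\lambda_1,\lambda_2\ge0$, $\nu>0$, a symmetric positive definite $P\in\mathbb R^{n\times n}$ and $L_K\in\mathbb R^{m\times n}$ such that $$S(P,L_K,\nu)-\lambda_1\widetilde N_1-\lambda_2\widetilde N_2\succ0,$$ and set $K:=L_KP^{-1}$. Then for every pair $(A,B)\in\mathbb R^{n\times n}\times\mathbb R^{n\times m}$ for which there exists $W\in\mathbb R^{n\times L}$ with $H^+=AH+B\Xi+W$ and $WW^\top\preceq\beta I_n$, and every pair $(\Delta A,\Delta B)\in\mathbb R^{n\times n}\times\mathbb R^{n\times m}$ with $\Delta A\Delta A^\top+\Delta B\Delta B^\top\preceq\rho^2 I_n$, the closed-loop matrix $A_{\rm cl}:=A+BK+\Delta A+\Delta B\,K$ satisfies $$\alpha P-A_{\rm cl}\,P\,A_{\rm cl}^\top\succ0 .$$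
   Context: $\succ,\succeq,\preceq$ denote the Loewner order on symmetric matrices; $I_k$ is the $k\times k$ identity. In the paper, $(H,H^+,\Xi)=(H_{i-1},H_{i-1}^+,\Xi_{i-1})$ are the deviation data matrices collected on the previous segment, $\beta=\beta_{i-1}$ is the aggregated disturbance-energy bound, and $\rho=C\widetilde T_i$ is the Jacobian-variation bound. *)

(* Defs.v *)
From HB Require Import structures.
From mathcomp Require Import all_boot all_order all_algebra.
From mathcomp Require Import reals.
Set Implicit Arguments. Unset Strict Implicit. Unset Printing Implicit Defensive.
Import Order.TTheory GRing.Theory Num.Theory.
Local Open Scope ring_scope.

Definition symmetric_mx (R : realType) k (M : 'M[R]_k) : Prop := M^T = M.

Definition posdef (R : realType) k (M : 'M[R]_k) : Prop :=
  symmetric_mx M /\ forall v : 'rV[R]_k, v != 0 -> 0 < (v *m M *m v^T) 0 0.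

Definition possemidef (R : realType) k (M : 'M[R]_k) : Prop :=
  symmetric_mx M /\ forall v : 'rV[R]_k, 0 <= (v *m M *m v^T) 0 0.

Definition loewner_le (R : realType) k (A B : 'M[R]_k) : Prop := possemidef (B - A).

(* Block structure: the five block rows n, n, m, n, m are nested as
   n + ((n + m) + (n + m)); the sixth block (size n) is appended on the right. *)
Definition dim5 (n m : nat) : nat := (n + ((n + m) + (n + m)))%N.

Definition N1 (R : realType) (n m L : nat) (beta : R)
  (H Hp : 'M[R]_(n, L)) (Xi : 'M[R]_(m, L)) : 'M[R]_(dim5 n m) :=
  let F : 'M[R]_(dim5 n m, n + L) :=
    col_mx (row_mx 1%:M Hp)
      (col_mx (col_mx (row_mx 0 (- H)) (row_mx 0 (- Xi))) 0) in
  let Mid : 'M[R]_(n + L) := block_mx (beta%:M) 0 0 (- 1%:M) in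
  F *m Mid *m F^T.

Definition N2 (R : realType) (n m : nat) (rho : R) : 'M[R]_(dim5 n m) :=
  let F : 'M[R]_(dim5 n m, n + (n + m)) :=
    col_mx (row_mx 1%:M 0) (col_mx 0 (row_mx 0 1%:M)) in
  let Mid : 'M[R]_(n + (n + m)) := block_mx ((rho ^+ 2)%:M) 0 0 (- 1%:M) in
  F *m Mid *m F^T.

Definition tilde (R : realType) (n m : nat) (N : 'M[R]_(dim5 n m))
  : 'M[R]_(dim5 n m + n) := block_mx N 0 0 0.

Definition Smat (R : realType) (n m : nat) (alpha : R)
  (P : 'M[R]_n) (LK : 'M[R]_(m, n)) (nu : R) : 'M[R]_(dim5 n m + n) :=
  let Q : 'M[R]_(n + m) := block_mx (- P) (- LK^T) (- LK) 0 in
  let S5 : 'M[R]_(dim5 n m) :=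
    block_mx (alpha *: P - nu%:M) 0 0 (block_mx Q Q Q Q) in
  let C : 'M[R]_(dim5 n m, n) :=
    col_mx 0 (col_mx (col_mx 0 LK) (col_mx 0 LK)) in
  block_mx S5 C C^T P.

(* Main.v *)
Require Import Defs.
From HB Require Import structures.
From mathcomp Require Import all_boot all_order all_algebra.
From mathcomp Require Import reals ring lra.
Import Order.TTheory GRing.Theory Num.Theory.
Local Open Scope ring_scope.

Lemma tr11 (R : realType) (a : 'M[R]_1) : a^T = a.
Proof. by apply/matrixP => i j; rewrite !ord1 mxE. Qed.

Lemma e00D (R : realType) (a b : 'M[R]_1) : (a + b) 0 0 = a 0 0 + b 0 0.
Proof. by rewrite mxE. Qed.
Lemma e00N (R : realType) (a : 'M[R]_1) : (- a) 0 0 = - a 0 0.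
Proof. by rewrite mxE. Qed.

Lemma abel3 (V : zmodType) (a b c : V) : a + b + c - a - b = c.
Proof. by rewrite -addrA -opprD addrAC subrr add0r. Qed.

Lemma qN1 (R : realType) (n m L : nat) (beta : R) (H Hp : 'M[R]_(n, L)) (Xi : 'M[R]_(m, L))
  (v x1 x2 : 'rV[R]_n) (u1 u2 : 'rV[R]_m) :
  let z5 : 'rV[R]_(dim5 n m) := row_mx v (row_mx (row_mx x1 u1) (row_mx x2 u2)) in
  let d := v *m Hp - x1 *m H - u1 *m Xi in
  z5 *m N1 beta H Hp Xi *m z5^T = beta *: (v *m v^T) - d *m d^T.
Proof.
move=> z5 d; rewrite /N1 /=.
set F := col_mx _ _.
rewrite !mulmxA -mulmxA -trmx_mul.
have -> : z5 *m F = row_mx v d.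
  rewrite /z5 /F !(mul_row_col, mul_mx_row, add_row_mx, mulmx0, mul0mx, addr0, add0r, mulmx1).
  by rewrite /d !mulmxN addrA.
rewrite (mul_row_block v d) tr_row_mx mul_row_col.
by rewrite !mulmx0 addr0 add0r mul_mx_scalar mulmxN mulmx1 mulNmx -scalemxAl.
Qed.

Lemma qN2 (R : realType) (n m : nat) (rho : R)
  (v x1 x2 : 'rV[R]_n) (u1 u2 : 'rV[R]_m) :
  let z5 : 'rV[R]_(dim5 n m) := row_mx v (row_mx (row_mx x1 u1) (row_mx x2 u2)) in
  z5 *m N2 n m rho *m z5^T = (rho ^+ 2) *: (v *m v^T) - (x2 *m x2^T + u2 *m u2^T).
Proof.
move=> z5; rewrite /N2 /=.
set F := col_mx _ _.
rewrite !mulmxA -mulmxA -trmx_mul.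
have -> : z5 *m F = row_mx v (row_mx x2 u2).
  rewrite /z5 /F !(mul_row_col, mul_mx_row, add_row_mx, mulmx0, mul0mx, addr0, add0r, mulmx1).
  by [].
rewrite (mul_row_block v) tr_row_mx mul_row_col.
by rewrite !mulmx0 addr0 add0r mul_mx_scalar mulmxN mulmx1 mulNmx -scalemxAl tr_row_mx mul_row_col.
Qed.

Lemma qtilde (R : realType) (n m : nat) (N : 'M[R]_(dim5 n m)) (z5 : 'rV[R]_(dim5 n m)) (x3 : 'rV[R]_n) :
  row_mx z5 x3 *m tilde N *m (row_mx z5 x3)^T = z5 *m N *m z5^T.
Proof.
rewrite /tilde (mul_row_block z5) tr_row_mx mul_row_col.
by rewrite !mulmx0 !addr0 mul0mx addr0.
Qed.

Lemma qS (R : realType) (n m : nat) (alpha nu : R) (P : 'M[R]_n) (LK : 'M[R]_(m, n))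
  (v x1 x2 x3 : 'rV[R]_n) (u1 u2 : 'rV[R]_m) :
  let z5 : 'rV[R]_(dim5 n m) := row_mx v (row_mx (row_mx x1 u1) (row_mx x2 u2)) in
  let s := x1 + x2 in let t := u1 + u2 in
  row_mx z5 x3 *m Smat alpha P LK nu *m (row_mx z5 x3)^T =
  v *m (alpha *: P - nu%:M) *m v^T - s *m P *m s^T - t *m LK *m s^T - s *m LK^T *m t^T
   + t *m LK *m x3^T + x3 *m LK^T *m t^T + x3 *m P *m x3^T.
Proof.
move=> z5 s t; rewrite /Smat /=.
rewrite (mul_row_block z5) tr_row_mx mul_row_col /z5.
rewrite !(mul_row_block, mul_row_col, tr_row_mx, tr_col_mx, mul_mx_row, add_row_mx, mulmx0, mul0mx, addr0, add0r, mulmx1, trmx0).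
rewrite /s /t !linearD /= !(mulmxDl, mulmxDr, mulmxN, mulNmx, mulmxA).
apply/matrixP => i j; rewrite !ord1 !(e00D, e00N); ring.
Qed.

Lemma e00Z (R : realType) (a : R) (b : 'M[R]_1) : (a *: b) 0 0 = a * b 0 0.
Proof. by rewrite mxE. Qed.

Lemma vvge0 (R : realType) k (v : 'rV[R]_k) : 0 <= (v *m v^T) 0 0.
Proof. rewrite mxE; apply: sumr_ge0 => i _; rewrite mxE; by rewrite -expr2 sqr_ge0. Qed.

Theorem theorem1 (R : realType) (n m L : nat)
  (hn : (0 < n)%N) (hm : (0 < m)%N) (hL : (0 < L)%N)
  (alpha beta rho : R)
  (halpha0 : 0 < alpha) (halpha1 : alpha < 1) (hbeta : 0 <= beta) (hrho : 0 <= rho)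
  (H Hp : 'M[R]_(n, L)) (Xi : 'M[R]_(m, L))
  (lambda1 lambda2 nu : R) (P : 'M[R]_n) (LK : 'M[R]_(m, n))
  (hl1 : 0 <= lambda1) (hl2 : 0 <= lambda2) (hnu : 0 < nu)
  (hP : posdef P)
  (hLMI : posdef (Smat alpha P LK nu
                  - lambda1 *: tilde (N1 beta H Hp Xi)
                  - lambda2 *: tilde (N2 n m rho))) :
  let K : 'M[R]_(m, n) := LK *m invmx P in
  forall (A : 'M[R]_n) (B : 'M[R]_(n, m)),
    (exists W : 'M[R]_(n, L),
        Hp = A *m H + B *m Xi + W /\ loewner_le (W *m W^T) (beta%:M)) ->
  forall (dA : 'M[R]_n) (dB : 'M[R]_(n, m)),
    loewner_le (dA *m dA^T + dB *m dB^T) ((rho ^+ 2)%:M) ->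
    let Acl := A + B *m K + dA + dB *m K in
    posdef (alpha *: P - Acl *m P *m Acl^T).
Proof.
move=> K A B [W [hHp hW]] dA dB hd Acl.
have Psym : P^T = P by case: hP.
have Punit : P \in unitmx.
  rewrite unitmxE unitfE; apply/negP => /det0P [v hv hvP].
  by have := hP.2 v hv; rewrite hvP mul0mx mxE ltxx.
have hKP : forall r : 'rV[R]_m, r *m K *m P = r *m LK.
  by move=> r; rewrite -mulmxA /K -mulmxA mulVmx // mulmx1.
have hKT : K^T = invmx P *m LK^T by rewrite /K trmx_mul trmx_inv Psym.
have hPK : forall r : 'rV[R]_n, r *m P *m K^T = r *m LK^T.
  by move=> r; rewrite hKT !mulmxA -(mulmxA r P) mulmxV // mulmx1.
have hKL : forall r : 'rV[R]_m, r *m K *m LK^T = r *m LK *m K^T.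
  by move=> r; rewrite hKT /K !mulmxA.
split.
  by rewrite /symmetric_mx linearB linearZ /= Psym trmx_mul trmx_mul trmxK Psym mulmxA.
move=> v hv.
pose x1 := v *m A; pose u1 := v *m B; pose x2 := v *m dA; pose u2 := v *m dB.
pose s := x1 + x2; pose t := u1 + u2; pose x3 := - (t *m K).
pose z5 : 'rV[R]_(dim5 n m) := row_mx v (row_mx (row_mx x1 u1) (row_mx x2 u2)).
have hz0 : row_mx z5 x3 != 0 by rewrite /z5 !row_mx_eq0 (negbTE hv).
have := hLMI.2 _ hz0.
rewrite !mulmxBr !mulmxBl -!scalemxAr -!scalemxAl !qtilde /z5 qS qN1 qN2 -/s -/t.
have hdW : v *m Hp - x1 *m H - u1 *m Xi = v *m W.
  by rewrite hHp !mulmxDr !mulmxA /x1 /u1 abel3.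
rewrite hdW.
have f1 : 0 <= (beta *: (v *m v^T) - v *m W *m (v *m W)^T) 0 0.
  have := hW.2 v; rewrite mulmxBr mulmxBl mul_mx_scalar -scalemxAl trmx_mul !mulmxA.
  done.
have f2 : 0 <= (rho ^+ 2 *: (v *m v^T) - (x2 *m x2^T + u2 *m u2^T)) 0 0.
  have := hd.2 v; rewrite mulmxBr mulmxBl mul_mx_scalar -scalemxAl mulmxDr mulmxDl.
  by rewrite /x2 /u2 !trmx_mul !mulmxA.
have hvA : v *m Acl = s + t *m K.
  rewrite /Acl /s /t /x1 /x2 /u1 /u2 !mulmxDr !mulmxA mulmxDl.
  by rewrite mulmxDl -addrA addrACA.
rewrite !mulmxA -(mulmxA (v *m Acl *m P)) -trmx_mul hvA.
rewrite /x3; clearbody s t x2 u2 K; move=> hz.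
have f3 := @vvge0 _ _ v.
rewrite !raddfN !raddfD /= !trmx_mul in hz f1 f2 *.
rewrite !(mulmxDl, mulmxDr, mulmxN, mulNmx, mulmxA) in hz f1 f2 *.
rewrite ?hKP ?hPK ?hKL in hz *.
rewrite mul_mx_scalar -scalemxAl -scalemxAr -scalemxAl in hz.
rewrite !(e00D, e00N, e00Z) in hz f1 f2 *.
have g1 := mulr_ge0 hl1 f1; have g2 := mulr_ge0 hl2 f2; have g3 := mulr_ge0 (ltW hnu) f3.
nra.
Qed.
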